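(* Suppose an iteration of Dual KOSZ starting from potentials $\mathbf x^t$ samples a tree edge $(i,j)\in T$ with probability $P_{ij}=\frac1\tau\cdot\frac{r(i,j)}{R(C(i,j))}$, where $\tau=\sum_{(i,j)\in T}\frac{r(i,j)}{R(C(i,j))}$, producing $\mathbf x^{t+1}$. Then $$\mathcal B(\mathbf x^* )-\mathbb E[\mathcal B(\mathbf x^{t+1})]\le\Big(1-\frac1\tau\Big)\big(\mathcal B(\mathbf x^* )-\mathcal B(\mathbf x^t)\big).$$
   Context: $G=(V,E)$ is a connected undirected graph with resistances $r(e)>0$; $\mathbf b\in\mathbb R^V$ with $\sum_ib(i)=0$; $\mathbf L=\sum_{ij\in E}\frac1{r(i,j)}(\mathbf e_i-\mathbf e_j)(\mathbf e_i-\mathbf e_j)^\top$, $\mathcal B(\mathbf x)=\mathbf b^\top\mathbf x-\frac12\mathbf x^\top\mathbf L\mathbf x$, and $\mathbf x^*$ maximizes $\mathcal B$. $T$ is a spanning tree, rooted, with tree edges directed toward the root; for a tree edge $(i,j)$, $C(i,j)$ is the vertex set of the component of $T-ij$ containing $i$. For $C\subset V$: $R(C)=(\sum_{e\in\delta(C)}1/r(e))^{-1}$, $b(C)=\sum_{v\in C}b(v)$, $f(C)=\sum_{kl\in E,k\in C,l\notin C}\frac{x^t(k)-x^t(l)}{r(k,l)}$. One iteration of Dual KOSZ with sampled edge $(i,j)$: with $C=C(i,j)$ and $\Delta=(b(C)-f(C))R(C)$, set $\mathbf x^{t+1}=\mathbf x^t+\Delta\mathbbm 1_C$. The expectation is over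 the sampled edge. *)

(* Defs.v *)
From HB Require Import structures.
From mathcomp Require Import all_boot all_order all_algebra.
Set Implicit Arguments. Unset Strict Implicit. Unset Printing Implicit Defensive.
Import Order.TTheory GRing.Theory Num.Theory.
Local Open Scope ring_scope.

Section KOSZ.
Variables (R : realFieldType) (V : finType).

(* Graph G = (V, E): E is a symmetric irreflexive relation; r v w is the
   resistance of edge vw (only meaningful when E v w). *)

(* (L x)(v) = sum_{u : vu in E} (x v - x u) / r(v,u): the Laplacian
   L = sum_{ij in E} 1/r(i,j) (e_i - e_j)(e_i - e_j)^T applied to x. *)
Definition lap (E : rel V) (r : V -> V -> R) (x : V -> R) (v : V) : R :=
  \sum_(u | E v u) (x v - x u) / r v u.

Definition Bfun (E : rel V) (r : V -> V -> R) (b : V -> R) (x : V -> R) : R :=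
  \sum_v b v * x v - 2^-1 * \sum_v x v * lap E r x v.

(* A rooted spanning tree of G given by a root and a parent map:
   the tree edges are (v, par v) for v <> root, directed toward the root. *)
Definition rooted_spanning_tree (E : rel V) (root : V) (par : V -> V) : Prop :=
  par root = root /\
  (forall v, v != root -> E v (par v)) /\
  (forall v, exists k, iter k par v = root).

Definition tree_adj (root : V) (par : V -> V) : rel V :=
  fun a c => ((a != root) && (c == par a)) || ((c != root) && (a == par c)).

Definition tree_adj_minus (root : V) (par : V -> V) (i j : V) : rel V :=
  fun a c => tree_adj root par a c &&
             ~~ (((a == i) && (c == j)) || ((a == j) && (c == i))).

Definition Ccomp (root : V) (par : V -> V) (i j : V) : {set V} :=
  [set u | connect (tree_adj_minus root par i j) i u].

Definition Rcut (E : rel V) (r : V -> V -> R) (C : {set V}) : R :=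
  (\sum_(k in C) \sum_(l | (l \notin C) && E k l) (r k l)^-1)^-1.

Definition bset (b : V -> R) (C : {set V}) : R := \sum_(v in C) b v.

Definition fflow (E : rel V) (r : V -> V -> R) (x : V -> R) (C : {set V}) : R :=
  \sum_(k in C) \sum_(l | (l \notin C) && E k l) (x k - x l) / r k l.

Definition kosz_step (E : rel V) (r : V -> V -> R) (b : V -> R)
    (root : V) (par : V -> V) (x : V -> R) (i j : V) : V -> R :=
  let C := Ccomp root par i j in
  let Delta := (bset b C - fflow E r x C) * Rcut E r C in
  fun v => x v + (if v \in C then Delta else 0).

Definition tau (E : rel V) (r : V -> V -> R) (root : V) (par : V -> V) : R :=
  \sum_(v | v != root) r v (par v) / Rcut E r (Ccomp root par v (par v)).

Definition Pedge (E : rel V) (r : V -> V -> R) (root : V) (par : V -> V)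
    (v : V) : R :=
  (tau E r root par)^-1 * (r v (par v) / Rcut E r (Ccomp root par v (par v))).

End KOSZ.

(* Main.v *)
Require Import Defs.
From HB Require Import structures.
From mathcomp Require Import all_boot all_order all_algebra.
From mathcomp Require Import ring lra.
Set Implicit Arguments. Unset Strict Implicit. Unset Printing Implicit Defensive.
Import Order.TTheory GRing.Theory Num.Theory.
Local Open Scope ring_scope.

Section Alg.
Variables (R : realFieldType) (V : finType) (E : rel V) (r : V -> V -> R).
Hypotheses (symE : symmetric E) (rsym : forall u v, r u v = r v u).

Lemma swap_sum (P : rel V) (F : V -> V -> R) : (forall u v, P u v = P v u) ->
  \sum_v \sum_(u | P v u) F v u = \sum_v \sum_(u | P v u) F u v.
Proof.
move=> Ps.
rewrite (eq_bigr (fun v => \sum_u (if P v u then F v u else 0))); last first.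
  by move=> v _; rewrite big_mkcond.
rewrite exchange_big /=; apply: eq_bigr => v _; rewrite [RHS]big_mkcond.
by apply: eq_bigr => u _; rewrite Ps.
Qed.

Lemma anti_zero (P : rel V) (F : V -> V -> R) : (forall u v, P u v = P v u) ->
  (forall u v, F u v = - F v u) -> \sum_v \sum_(u | P v u) F v u = 0.
Proof.
move=> Ps Fa; set S := (X in X = 0).
have h : S = - S.
  rewrite {1}/S swap_sum // -sumrN; apply: eq_bigr => v _.
  by rewrite -sumrN; apply: eq_bigr => u _; rewrite Fa.
lra.
Qed.

Lemma lap_in x (C : {set V}) : \sum_(v in C) lap E r x v = fflow E r x C.
Proof.
rewrite /fflow /lap.
under eq_bigr => v _ do rewrite (bigID (fun u => u \in C)) /=.
rewrite big_split /=.
have -> : \sum_(v in C) \sum_(u | E v u && (u \in C)) (x v - x u) / r v u = 0.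
  rewrite big_mkcond /=.
  rewrite -[RHS](@anti_zero (fun v u => [&& v \in C, u \in C & E v u])
     (fun v u => (x v - x u) / r v u)).
  - apply: eq_bigr => v _; case: (v \in C) => /=.
      by apply: eq_bigl => u; rewrite andbC.
    by rewrite big_pred0.
  - by move=> u v; rewrite symE andbCA.
  - by move=> u v; rewrite rsym -mulNr opprB.
rewrite add0r; apply: eq_bigr => v _; apply: eq_bigl => u; by rewrite andbC.
Qed.

Definition Qf (x y : V -> R) := \sum_v x v * lap E r y v.
Definition Wf (x y : V -> R) :=
  \sum_v \sum_(u | E v u) (x v - x u) * (y v - y u) / r v u.

Lemma Q_W x y : Qf x y = 2^-1 * Wf x y.
Proof.
have h1 : Qf x y = \sum_v \sum_(u | E v u) x v * ((y v - y u) / r v u).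
  by apply: eq_bigr => v _; rewrite /lap mulr_sumr.
have h2 : Qf x y = \sum_v \sum_(u | E v u) x u * ((y u - y v) / r u v).
  by rewrite h1 swap_sum.
have h3 : Qf x y + Qf x y = Wf x y.
  rewrite {1}h1 h2 -big_split; apply: eq_bigr => v _.
  rewrite -big_split; apply: eq_bigr => u _; rewrite (rsym u v) /=; ring.
rewrite -h3; lra.
Qed.

Lemma Q_sym x y : Qf x y = Qf y x.
Proof.
rewrite !Q_W /Wf; congr (_ * _); apply: eq_bigr => v _; apply: eq_bigr => u _.
by rewrite (mulrC (x v - x u)).
Qed.

Lemma lapD x y v : lap E r (fun w => x w + y w) v = lap E r x v + lap E r y v.
Proof. rewrite /lap -big_split; apply: eq_bigr => u _ /=; ring. Qed.

Lemma eq_lap x y : x =1 y -> forall v, lap E r x v = lap E r y v.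
Proof. by move=> h v; apply: eq_bigr => u _; rewrite !h. Qed.

Lemma eq_Bfun b x y : x =1 y -> Bfun E r b x = Bfun E r b y.
Proof.
move=> h; rewrite /Bfun; congr (_ - _ * _); apply: eq_bigr => v _.
  by rewrite h.
by rewrite h (eq_lap h).
Qed.

Lemma Bfun_add b x y : Bfun E r b (fun v => x v + y v) =
  Bfun E r b x + \sum_v b v * y v - Qf y x - 2^-1 * Qf y y.
Proof.
have hQ : \sum_v (x v + y v) * lap E r (fun w => x w + y w) v =
   Qf x x + Qf x y + Qf y x + Qf y y.
  rewrite /Qf -!big_split; apply: eq_bigr => v _ /=; rewrite lapD; ring.
rewrite /Bfun hQ (Q_sym x y).
have -> : \sum_v b v * (x v + y v) = \sum_v b v * x v + \sum_v b v * y v.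
  by rewrite -big_split; apply: eq_bigr => v _ /=; ring.
rewrite -/(Qf x x); lra.
Qed.

Lemma step_gain b x (C : {set V}) :
  Bfun E r b (fun v => x v + (if v \in C then
        (bset b C - fflow E r x C) * Rcut E r C else 0)) =
  Bfun E r b x + (bset b C - fflow E r x C) ^+ 2 * Rcut E r C / 2.
Proof.
set g := bset b C - fflow E r x C.
set s := \sum_(k in C) \sum_(l | (l \notin C) && E k l) (r k l)^-1.
have hR : Rcut E r C = s^-1 by [].
set D := g * Rcut E r C.
set y := fun v => if v \in C then D else 0.
rewrite (Bfun_add b x y).
have hb : \sum_v b v * y v = D * bset b C.
  rewrite /bset mulr_sumr [RHS]big_mkcond; apply: eq_bigr => v _.
  by rewrite /y; case: (v \in C); rewrite ?mulr0 // mulrC.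
have hQ1 : Qf y x = D * fflow E r x C.
  rewrite -lap_in /Qf mulr_sumr [RHS]big_mkcond; apply: eq_bigr => v _.
  by rewrite /y; case: (v \in C); rewrite ?mul0r.
have hQ2 : Qf y y = D * (D * s).
  rewrite /Qf.
  have -> : \sum_v y v * lap E r y v = D * \sum_(v in C) lap E r y v.
    rewrite mulr_sumr [RHS]big_mkcond; apply: eq_bigr => v _.
    by rewrite /y; case: (v \in C); rewrite ?mul0r.
  rewrite lap_in /fflow /s; congr (_ * _); rewrite mulr_sumr.
  apply: eq_bigr => k kC; rewrite mulr_sumr; apply: eq_bigr => l /andP [lC _].
  by rewrite /y kC (negbTE lC) subr0.
rewrite hb hQ1 hQ2 /D hR.
have [->|s0] := eqVneq s 0; first by rewrite invr0; ring.
by rewrite /g; field.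
Qed.

End Alg.

Section Tree.
Variables (R : realFieldType) (V : finType) (E : rel V) (r : V -> V -> R).
Variables (root : V) (par : V -> V).
Hypotheses (symE : symmetric E) (rsym : forall u v, r u v = r v u).
Hypothesis rpos : forall u v, E u v -> 0 < r u v.
Hypothesis pr : par root = root.
Hypothesis pE : forall v, v != root -> E v (par v).
Hypothesis preach : forall v, exists k, iter k par v = root.

Local Notation C v := (Ccomp root par v (par v)).

Lemma iter_root k : iter k par root = root.
Proof. by elim: k => //= k ->. Qed.

Lemma nocycle u k : iter k.+1 par u = u -> u = root.
Proof.
move=> h; have [n hn] := preach u.
have hm : forall m, iter (m * k.+1) par u = u.
  elim=> [|m IH] //; by rewrite mulSn iterD IH h.
have := hm n; have -> : (n * k.+1 = (n * k.+1 - n) + n)%N.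
  by rewrite subnK // leq_pmulr.
by rewrite iterD hn iter_root => ->.
Qed.

Lemma anc_step v a c : v != root -> (exists k, iter k par a = v) ->
  tree_adj_minus root par v (par v) a c -> exists k, iter k par c = v.
Proof.
move=> vr [k hk] /andP [/orP [/andP [ar /eqP hc] | /andP [cr /eqP ha]] hn].
- case: k hk => [|k] hk.
    by move: hn; rewrite /= in hk; rewrite hc hk !eqxx.
  by exists k; rewrite hc -iterSr.
- by exists k.+1; rewrite iterSr -ha.
Qed.

Lemma path_anc v p : v != root -> forall a, (exists k, iter k par a = v) ->
  path (tree_adj_minus root par v (par v)) a p ->
  exists k, iter k par (last a p) = v.
Proof.
move=> vr; elim: p => [|c p IH] a ha //= /andP [h1 h2].
by apply: IH h2; exact: anc_step ha h1.
Qed.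

Lemma anc_C v u : v != root ->
  (u \in C v) <-> exists k, iter k par u = v.
Proof.
move=> vr; rewrite inE; split.
- case/connectP => p hp ->; apply: path_anc hp => //.
  by exists 0%N.
- case=> k; elim: k u => [|k IH] u; first by move=> /= ->; exact: connect0.
  move=> h; have ur : u != root.
    by apply/eqP => ur; move: h vr; rewrite ur iter_root => <-; rewrite eqxx.
  rewrite iterSr in h; apply: connect_trans (IH _ h) (connect1 _).
  apply/andP; split; first by rewrite /tree_adj ur eqxx orbT.
  apply/negP; case/orP => /andP [/eqP h1 /eqP h2].
  + have : iter 2 par v = v by rewrite /= -h2 h1.
    by move/nocycle => vr'; move: vr; rewrite vr' eqxx.
  + move: h; rewrite h2 -iterSr => /nocycle vr'; by move: vr; rewrite vr' eqxx.
Qed.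

Lemma par_notin v : v != root -> par v \notin C v.
Proof.
move=> vr; apply/negP => /(anc_C _ vr) [k]; rewrite -iterSr => /nocycle h.
by rewrite h eqxx in vr.
Qed.

Lemma two_cycle v : v != root -> par (par v) != v.
Proof.
move=> vr; apply/eqP => h; have : iter 2 par v = v by rewrite /= h.
by move/nocycle => h'; rewrite h' eqxx in vr.
Qed.

Lemma Rcut_pos v : v != root -> 0 < Rcut E r (C v).
Proof.
move=> vr; rewrite /Rcut invr_gt0.
rewrite (bigD1 v) /=; last by rewrite inE connect0.
rewrite (bigD1 (par v)) /=; last by rewrite par_notin // pE.
have h1 : 0 < (r v (par v))^-1 by rewrite invr_gt0 rpos // pE.
set a := \sum_(i | _ && _) _.
set c := \sum_(i | _ && _) _.
have h2 : 0 <= a.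
  by apply: sumr_ge0 => l /andP [/andP [_ hE] _]; rewrite invr_ge0 ltW // rpos.
have h3 : 0 <= c.
  apply: sumr_ge0 => k _; apply: sumr_ge0 => l /andP [_ hE].
  by rewrite invr_ge0 ltW // rpos.
lra.
Qed.

Lemma tele_root (z : V -> R) :
  \sum_(v | (v != root) && (root \in C v)) (z v - z (par v)) = 0.
Proof.
apply: big_pred0 => v; case: (boolP (v != root)) => vr //=.
apply/negP => /(anc_C _ vr) [k]; rewrite iter_root => h.
by rewrite h eqxx in vr.
Qed.

Lemma telescope (z : V -> R) u :
  \sum_(v | (v != root) && (u \in C v)) (z v - z (par v)) = z u - z root.
Proof.
have [n hn] := preach u.
elim: n u hn => [|n IH] u hn.
  by rewrite /= in hn; rewrite hn tele_root subrr.
case: (eqVneq u root) => [-> | ur]; first by rewrite tele_root subrr.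
rewrite iterSr in hn; have := IH _ hn => {}IH.
rewrite (bigD1 u) /=; last by rewrite ur; apply/anc_C => //; exists 0%N.
rewrite (eq_bigl (fun v => (v != root) && (par u \in C v))); last first.
  move=> v; case: (boolP (v != root)) => vr //=.
  apply/idP/idP.
  - case/andP => /(anc_C _ vr) [[|k] hk] vu.
      by rewrite /= in hk; rewrite hk eqxx in vu.
    by apply/(anc_C _ vr); exists k; rewrite -iterSr.
  - move/(anc_C _ vr) => [k hk]; apply/andP; split.
      by apply/(anc_C _ vr); exists k.+1; rewrite iterSr.
    apply/eqP => vu; rewrite vu -iterSr in hk.
    by move/nocycle: hk => h; rewrite h eqxx in ur.
by rewrite IH addrA subrK.
Qed.

Lemma tree_ident (z G : V -> R) : \sum_v G v = 0 ->
  \sum_v z v * G v =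
  \sum_(v | v != root) (\sum_(u in C v) G u) * (z v - z (par v)).
Proof.
move=> hG; symmetry.
rewrite (eq_bigr (fun v => \sum_(u in C v) G u * (z v - z (par v)))); last first.
  by move=> v _; rewrite mulr_suml.
rewrite (exchange_big_dep predT) //=.
under eq_bigr => u _ do rewrite -mulr_sumr telescope.
have -> : \sum_u G u * (z u - z root) = \sum_u z u * G u - (\sum_u G u) * z root.
  by rewrite mulr_suml -sumrB; apply: eq_bigr => u _; ring.
by rewrite hG mul0r subr0.
Qed.

Lemma W_lower (z : V -> R) :
  2 * \sum_(v | v != root) (z v - z (par v)) * (z v - z (par v)) / r v (par v)
  <= Wf E r z z.
Proof.
set w := fun v u => (z v - z u) * (z v - z u) / r v u.
have -> : Wf E r z z = \sum_v \sum_(u | E v u) w v u by [].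
have step_a : forall v,
    \sum_(u | tree_adj root par v u) w v u <= \sum_(u | E v u) w v u.
  move=> v; rewrite [X in _ <= X](bigID (tree_adj root par v)) /=.
  have -> : \sum_(u | E v u && tree_adj root par v u) w v u =
            \sum_(u | tree_adj root par v u) w v u.
    apply: eq_bigl => u; apply/andP/idP => [[]//|h]; split=> //.
    case/orP: h => /andP [h1 /eqP ->]; first exact: pE.
    by rewrite symE; exact: pE.
  rewrite lerDl; apply: sumr_ge0 => u /andP [hE _].
  by apply: divr_ge0; [by rewrite -expr2 sqr_ge0 | exact: ltW (rpos hE)].
have step_b : \sum_v \sum_(u | tree_adj root par v u) w v u =
    2 * \sum_(v | v != root) w v (par v).
  have hs : forall v, \sum_(u | tree_adj root par v u) w v u =
     \sum_(u | (v != root) && (u == par v)) w v u +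
     \sum_(u | (u != root) && (v == par u)) w v u.
    move=> v; rewrite (bigID (fun u => (v != root) && (u == par v))) /=.
    congr (_ + _); apply: eq_bigl => u; rewrite /tree_adj.
      by case: (v != root) (u == par v) (u != root) (v == par u) => [] [] [] [].
    case hA: ((v != root) && (u == par v)) => /=; last by rewrite andbT.
    move/andP: hA => [vr /eqP hu].
    by rewrite hu (eq_sym v) (negbTE (two_cycle vr)) andbF.
  rewrite (eq_bigr _ (fun v _ => hs v)) big_split /=.
  have e1 : \sum_v \sum_(u | (v != root) && (u == par v)) w v u =
            \sum_(v | v != root) w v (par v).
    rewrite [RHS]big_mkcond; apply: eq_bigr => v _.
    case: (boolP (v != root)) => vr /=; last by rewrite big_pred0.
    by rewrite (big_pred1 (par v)).
  have e2 : \sum_v \sum_(u | (u != root) && (v == par u)) w v u =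
            \sum_(v | v != root) w v (par v).
    rewrite (exchange_big_dep (fun u => u != root)) /=; last by move=> v u _ /andP [].
    apply: eq_bigr => u ur; rewrite (big_pred1 (par u)); last by move=> v /=; rewrite ur.
    by rewrite /w rsym; congr (_ / _); ring.
  rewrite e1 e2; lra.
have hle : \sum_v \sum_(u | tree_adj root par v u) w v u <=
           \sum_v \sum_(u | E v u) w v u.
  by apply: ler_sum => v _; exact: step_a.
move: hle; rewrite step_b /w; lra.
Qed.

Lemma gap (z G : V -> R) : \sum_v G v = 0 ->
  \sum_v z v * G v - 2^-1 * Qf E r z z <=
  2^-1 * \sum_(v | v != root) r v (par v) * (\sum_(u in C v) G u) ^+ 2.
Proof.
move=> hG; rewrite tree_ident // Q_W //.
have hW := W_lower z.
have h1 : \sum_(v | v != root) (\sum_(u in C v) G u) * (z v - z (par v)) -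
   2^-1 * \sum_(v | v != root) (z v - z (par v)) * (z v - z (par v)) / r v (par v)
   <= 2^-1 * \sum_(v | v != root) r v (par v) * (\sum_(u in C v) G u) ^+ 2.
  rewrite !mulr_sumr -sumrB; apply: ler_sum => v vr.
  have rp := rpos (pE vr).
  set g := \sum_(u in C v) G u; set d := z v - z (par v); set rr := r v (par v).
  rewrite -subr_ge0.
  have -> : 2^-1 * (rr * g ^+ 2) - (g * d - 2^-1 * (d * d / rr)) =
            (rr * g - d) ^+ 2 / rr / 2.
    by field; rewrite lt0r_neq0.
  by rewrite divr_ge0 // divr_ge0 // ?sqr_ge0 // ltW.
lra.
Qed.

End Tree.

Theorem mainTheorem12 (R : realFieldType) (V : finType)
  (E : rel V) (r : V -> V -> R) (b : V -> R) (xstar x : V -> R)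
  (root : V) (par : V -> V) :
  symmetric E -> irreflexive E ->
  (forall u v, connect E u v) ->
  (forall u v, E u v -> 0 < r u v) ->
  (forall u v, r u v = r v u) ->
  \sum_v b v = 0 ->
  (forall y, Bfun E r b y <= Bfun E r b xstar) ->
  rooted_spanning_tree E root par ->
  Bfun E r b xstar -
    \sum_(v | v != root)
       Pedge E r root par v * Bfun E r b (kosz_step E r b root par x v (par v))
  <= (1 - (tau E r root par)^-1) * (Bfun E r b xstar - Bfun E r b x).
Proof.
move=> symE irrE conn rpos rsym hb hmax [pr [pE preach]].
set g := fun v => bset b (Ccomp root par v (par v)) -
                  fflow E r x (Ccomp root par v (par v)).
set S := \sum_(v | v != root) r v (par v) * g v ^+ 2.
have hgap : Bfun E r b xstar - Bfun E r b x <= 2^-1 * S.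
  set z := fun v => xstar v - x v.
  set G := fun v => b v - lap E r x v.
  have hxs : Bfun E r b xstar = Bfun E r b (fun v => x v + z v).
    by apply: eq_Bfun => v; rewrite /z addrC subrK.
  rewrite hxs Bfun_add //.
  have hG0 : \sum_v G v = 0.
    rewrite /G sumrB hb.
    have -> : \sum_v lap E r x v = fflow E r x setT.
      by rewrite -lap_in //; apply: eq_bigl => v; rewrite in_setT.
    rewrite /fflow big1 ?subrr // => k _; apply: big_pred0 => l.
    by rewrite in_setT.
  have hzG : \sum_v b v * z v - Qf E r z x = \sum_v z v * G v.
    by rewrite /Qf -sumrB; apply: eq_bigr => v _; rewrite /G; ring.
  have hg : forall v, \sum_(u in Ccomp root par v (par v)) G u = g v.
    by move=> v; rewrite /G sumrB lap_in.
  have hgp := gap symE rsym rpos pr pE preach z hG0.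
  have hS : \sum_(v | v != root) r v (par v) *
      (\sum_(u in Ccomp root par v (par v)) G u) ^+ 2 = S.
    by apply: eq_bigr => v _; rewrite hg.
  rewrite hS -hzG in hgp; lra.
have hstep : forall v, Bfun E r b (kosz_step E r b root par x v (par v)) =
    Bfun E r b x + g v ^+ 2 * Rcut E r (Ccomp root par v (par v)) / 2.
  by move=> v; rewrite /kosz_step step_gain.
case: (pickP (fun v => v != root)) => [v0 v0r | hnone].
- have htau : 0 < tau E r root par.
    rewrite /tau (bigD1 v0) //=.
    have h1 : 0 < r v0 (par v0) / Rcut E r (Ccomp root par v0 (par v0)).
      by rewrite divr_gt0 ?rpos ?pE // (Rcut_pos rpos pr pE preach).
    have h2 : 0 <= \sum_(i | (i != root) && (i != v0))
                  r i (par i) / Rcut E r (Ccomp root par i (par i)).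
      apply: sumr_ge0 => v /andP [vr _].
      by rewrite divr_ge0 // ltW // ?rpos ?pE // (Rcut_pos rpos pr pE preach).
    lra.
  set t := tau E r root par.
  have hsum : \sum_(v | v != root)
       Pedge E r root par v * Bfun E r b (kosz_step E r b root par x v (par v))
       = Bfun E r b x + t^-1 * (2^-1 * S).
    rewrite (eq_bigr (fun v => Bfun E r b x *
         (t^-1 * (r v (par v) / Rcut E r (Ccomp root par v (par v)))) +
         t^-1 * (2^-1 * (r v (par v) * g v ^+ 2)))); last first.
      move=> v vr; rewrite /Pedge hstep -/t.
      have Rp := Rcut_pos rpos pr pE preach vr.
      by field; rewrite !lt0r_neq0.
    rewrite big_split /= -!mulr_sumr -/S.
    have -> : \sum_(i | i != root) r i (par i) / Rcut E r (Ccomp root par i (par i))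
       = t by [].
    by rewrite mulVf ?lt0r_neq0 // mulr1.
  rewrite hsum.
  have key : t^-1 * (Bfun E r b xstar - Bfun E r b x) <= t^-1 * (2^-1 * S).
    by rewrite ler_wpM2l // ltW // invr_gt0.
  set Bs := Bfun E r b xstar in key *; set Bx := Bfun E r b x in key *.
  rewrite -subr_ge0.
  have -> : (1 - t^-1) * (Bs - Bx) - (Bs - (Bx + t^-1 * (2^-1 * S))) =
            t^-1 * (2^-1 * S) - t^-1 * (Bs - Bx) by ring.
  by rewrite subr_ge0.
- have hv : forall v, v = root.
    by move=> v; apply/eqP; move: (hnone v) => /= /negbFE.
  have hl : forall v, lap E r x v = 0.
    by move=> v; apply: big1 => u _; rewrite (hv u) (hv v) subrr mul0r.
  have hbx : \sum_v b v * x v = 0.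
    rewrite (eq_bigr (fun v => b v * x root)); last by move=> v _; rewrite (hv v).
    by rewrite -mulr_suml hb mul0r.
  have hB : Bfun E r b x = 0.
    rewrite /Bfun hbx big1 ?mulr0 ?subrr // => v _; by rewrite hl mulr0.
  rewrite big_pred0; last by move=> v; exact: hnone.
  rewrite /tau big_pred0; last by move=> v; exact: hnone.
  by rewrite invr0 hB subr0 subr0 mul1r.
Qed.
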